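(* Let $G\leq\operatorname{Homeo}(\mathfrak{C})$. If $G$ is vigorous then $G$ is lawless, i.e., there is no non-trivial freely reduced word $w$ in letters $x_1^{\pm1},\dots,x_j^{\pm 1}$ such that $w(g_1,\dots,g_j)=1_G$ for all $(g_1,\dots,g_j)\in G^j$.
   Context: $\mathfrak{C}$ denotes a Cantor space (a space homeomorphic to $\{0,1\}^\omega$). For $\gamma\in\operatorname{Homeo}(\mathfrak{C})$, $\operatorname{supp}(\gamma)=\{p\in\mathfrak{C}: p\gamma\neq p\}$ (right actions). A subset $S\subseteq \operatorname{Homeo}(\mathfrak{C})$ is vigorous if for all clopen $A,B,C\subseteq\mathfrak{C}$ with $B,C$ non-empty proper subsets of $A$ there is $\gamma\in S$ with $\operatorname{supp}(\gamma)\subseteq A$ and $B\gamma\subseteq C$. *)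

(* Defs.v *)
From HB Require Import structures.
From mathcomp Require Import all_boot all_order all_algebra.
From mathcomp Require Import all_classical all_reals all_analysis.
Set Implicit Arguments. Unset Strict Implicit. Unset Printing Implicit Defensive.
Local Open Scope classical_set_scope.

Notation Cantor := cantor_space.

Record homeo := Homeo {
  hfun : Cantor -> Cantor;
  hinv : Cantor -> Cantor;
  hfunK : cancel hfun hinv;
  hinvK : cancel hinv hfun;
  hfun_cont : continuous hfun;
  hinv_cont : continuous hinv }.

Definition id_homeo : homeo :=
  @Homeo id id (fun _ => erefl) (fun _ => erefl)
    (fun x => cvg_id) (fun x => cvg_id).

Lemma mul_homeo_K (g h : homeo) : cancel (hfun h \o hfun g) (hinv g \o hinv h).
Proof. by move=> x /=; rewrite (@hfunK h) (@hfunK g). Qed.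
Lemma mul_homeo_KV (g h : homeo) : cancel (hinv g \o hinv h) (hfun h \o hfun g).
Proof. by move=> x /=; rewrite (@hinvK g) (@hinvK h). Qed.
Lemma mul_homeo_c1 (g h : homeo) : continuous (hfun h \o hfun g).
Proof. by move=> x; apply: continuous_comp; apply: hfun_cont. Qed.
Lemma mul_homeo_c2 (g h : homeo) : continuous (hinv g \o hinv h).
Proof. by move=> x; apply: continuous_comp; apply: hinv_cont. Qed.

(* Right actions: p (g h) = (p g) h, so the product g h is "first g, then h". *)
Definition mul_homeo (g h : homeo) : homeo :=
  @Homeo (hfun h \o hfun g) (hinv g \o hinv h) (@mul_homeo_K g h)
    (@mul_homeo_KV g h) (@mul_homeo_c1 g h) (@mul_homeo_c2 g h).

Definition inv_homeo (g : homeo) : homeo :=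
  @Homeo (hinv g) (hfun g) (@hinvK g) (@hfunK g) (@hinv_cont g) (@hfun_cont g).

Definition is_subgroup (G : set homeo) : Prop :=
  [/\ G id_homeo,
      (forall g h, G g -> G h -> G (mul_homeo g h)) &
      (forall g, G g -> G (inv_homeo g))].

Definition supp (g : homeo) : set Cantor := [set p | hfun g p <> p].

Definition vigorous (S : set homeo) : Prop :=
  forall A B C : set Cantor, clopen A -> clopen B -> clopen C ->
    B !=set0 -> C !=set0 -> B `<` A -> C `<` A ->
    exists2 g, S g & (supp g `<=` A /\ hfun g @` B `<=` C).

(* Words in the letters x_1^{+-1}, ..., x_j^{+-1}: a letter (i, b) stands for
   x_i if b = true and x_i^{-1} if b = false. *)
Definition letter (j : nat) := ('I_j * bool)%type.

(* freely reduced: no two adjacent letters x_i^e x_i^{-e} *)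
Definition freely_reduced j (w : seq (letter j)) : bool :=
  sorted (fun a b : letter j => ~~ ((a.1 == b.1) && (a.2 != b.2))) w.

Definition eval_letter j (gs : 'I_j -> homeo) (a : letter j) : homeo :=
  if a.2 then gs a.1 else inv_homeo (gs a.1).

Definition eval_word j (gs : 'I_j -> homeo) (w : seq (letter j)) : homeo :=
  foldl (fun acc a => mul_homeo acc (eval_letter gs a)) id_homeo w.

Definition is_identity (g : homeo) : Prop := hfun g = id.

Definition lawless (G : set homeo) : Prop :=
  forall (j : nat) (w : seq (letter j)), freely_reduced w -> w <> [::] ->
    ~ (forall gs : 'I_j -> homeo, (forall i, G (gs i)) ->
         is_identity (eval_word gs w)).

(* Main.v *)
Require Import Defs.
From mathcomp Require Import all_boot all_order all_algebra.
From mathcomp Require Import all_classical all_reals all_analysis.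
From mathcomp Require Import zify.
Local Open Scope classical_set_scope.

Lemma open_coord k (b : bool) : open [set x : Cantor | x k = b].
Proof.
have -> : [set x : Cantor | x k = b] = proj k @^-1` [set b] by [].
apply: open_comp; [move=> + _; exact: proj_continuous| apply: discrete_open].
Qed.

Lemma clopen_coord k (b : bool) : clopen [set x : Cantor | x k = b].
Proof.
split; first exact: open_coord.
have -> : [set x : Cantor | x k = b] = ~` [set x : Cantor | x k = ~~ b].
  by apply/seteqP; split => x /=; case: (x k); case: b.
exact/open_closedC/open_coord.
Qed.

Fixpoint Z (m : nat) : set Cantor :=
  if m is m'.+1 then Z m' `&` [set x | x m' = false] else setT.
Definition Y m : set Cantor := Z m `&` [set x | x m = true].

Lemma clopen_Z m : clopen (Z m).
Proof. elim: m => [|m IH] /=; [exact: clopenT | exact: clopenI IH (clopen_coord _ _)]. Qed.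
Lemma clopen_Y m : clopen (Y m).
Proof. exact: clopenI (clopen_Z m) (clopen_coord _ _). Qed.

Lemma Z_le m n x : (m <= n)%N -> Z n x -> Z m x.
Proof. elim: n => [|n IH]; first by rewrite leqn0 => /eqP ->.
rewrite leq_eqVlt => /orP[/eqP -> //|]; rewrite ltnS => le [zn _]; exact: IH le zn. Qed.

Lemma Y_disj {m n x} : Y m x -> Y n x -> m = n.
Proof.
wlog lt : m n / (m < n)%N.
  move=> H ym yn; case: (ltngtP m n) => [h|h|//]; [exact: H|exact/esym/H].
move=> [_ xm] [zn _]; move: (@Z_le m.+1 n x lt zn) => /= [_]; by rewrite xm.
Qed.

Lemma Y_nonempty m : Y m (fun k => k == m).
Proof.
split => /=; last by rewrite eqxx.
suff H : forall n, (n <= m)%N -> Z n (fun k => k == m) by exact: H.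
elim => [|n IH] le //=; split; first by apply: IH; exact: ltnW.
by apply/negbTE; rewrite neq_ltn le.
Qed.

Lemma Y_zero m : ~ Y m (fun _ => false).
Proof. by case. Qed.

Definition X {j} (a : letter j) : set Cantor := Y (2 * a.1 + a.2).

Lemma X_inj {j} {a b : letter j} {x} : X a x -> X b x -> a = b.
Proof.
move=> xa xb; have := Y_disj xa xb; case: a b {xa xb} => [i e] [i' e'] /=.
case: e; case: e' => /= h.
- by congr pair; apply: val_inj => /=; lia.
- lia.
- lia.
- by congr pair; apply: val_inj => /=; lia.
Qed.

Definition app {j} (gs : 'I_j -> homeo) (w : seq (letter j)) p :=
  foldl (fun q a => hfun (eval_letter gs a) q) p w.

Lemma eval_wordE j (gs : 'I_j -> homeo) w p :
  hfun (eval_word gs w) p = app gs w p.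
Proof.
rewrite /eval_word /app.
suff H : forall acc q, hfun (foldl (fun acc a => mul_homeo acc (eval_letter gs a)) acc w) q
  = foldl (fun q a => hfun (eval_letter gs a) q) (hfun acc q) w by exact: H.
elim: w => [|a w IHw] acc q //=. by rewrite IHw.
Qed.

Definition rel_l j (a b : letter j) := ~~ ((a.1 == b.1) && (a.2 != b.2)).

Lemma pingpong j (gs : 'I_j -> homeo)
  (Hg : forall a q, ~ X (a.1, ~~ a.2) q -> X a (hfun (eval_letter gs a) q)) :
  forall w a q, path (@rel_l j) a w -> ~ X (a.1, ~~ a.2) q ->
    X (last a w) (app gs (a :: w) q).
Proof.
elim => [|b w IH] a q /=; first by move=> _; exact: Hg.
move=> /andP[rab pw] nq; apply: (IH b _ pw) => xb.
have xa := Hg _ _ nq.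
have e := X_inj xa xb; move: rab; rewrite /rel_l e /= eqxx /=.
by case: (b.2).
Qed.

Theorem theorem1p2 (G : set homeo) :
  is_subgroup G -> vigorous G -> lawless G.
Proof.
move=> _ vig j w red wne Hall.
have hex : forall i : 'I_j, exists g, G g /\
    (forall q, ~ Y (2 * i) q -> Y (2 * i + 1) (hfun g q)).
  move=> i.
  have [|||||||g Gg [_ gBC]] := vig setT (~` Y (2 * i)) (Y (2 * i + 1)).
  - exact: clopenT.
  - by apply: (@clopenC _ _ set0); exact: clopen_Y.
  - exact: clopen_Y.
  - by exists (fun _ => false); exact: Y_zero.
  - by exists (fun k => k == 2 * i + 1)%N; exact: Y_nonempty.
  - split => // /(_ (fun k => k == 2 * i)%N I); apply; exact: Y_nonempty.
  - split => // /(_ (fun _ => false) I); exact: Y_zero.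
  by exists g; split => // q nq; apply: gBC; exists q.
have [gs Hgs] := choice hex.
have Hg : forall a q, ~ X (a.1, ~~ a.2) q -> X a (hfun (eval_letter gs a) q).
  case=> i [] q /=; rewrite /X /= ?addn0 ?addn1.
  - by move=> nq; have [_ H] := Hgs i; move: (H _ nq); rewrite addn1.
  - move=> nq; apply: contrapT => nx.
    have [_ H] := Hgs i; apply: nq; have := H _ nx.
    by rewrite addn1 (@hinvK (gs i)).
have Gi : forall i, G (gs i) by move=> i; have [] := Hgs i.
have idw := Hall gs Gi.
clear Hall; case: w red wne idw => [//|a w] red _ idw.
have := @pingpong j gs Hg w a (fun _ => false) red.
rewrite -eval_wordE idw /=.
have : ~ X (a.1, ~~ a.2) (fun _ => false) by exact: Y_zero.
move=> h /(_ h); exact: Y_zero.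
Qed.
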